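(* Suppose AS.1 and AS.2 hold. Consider a recursive iteration $(\ell,i)$ of the MOFFTR algorithm described in the context, and suppose that $i_{\ell-1}\ge1$ iterations of the algorithm have been completed at level $\ell-1$ (iterates $x_{\ell-1,k}$, gradients $g_{\ell-1,k}=\nabla h_{\ell-1}(x_{\ell-1,k})$, steps $s_{\ell-1,k}$). Then, with $\delta_{\ell-1}=\alpha\|\Delta_{\ell,i}\|$, \[ \Big|g_{\ell,i}^Ts_{\ell,i}-\frac1\omega\sum_{k=0}^{i_{\ell-1}-1}g_{\ell-1,k}^Ts_{\ell-1,k}\Big|\le\frac{2\,i^{\max}_{\ell-1}\,L\,\delta_{\ell-1}^2}{\omega\,\sigma_{\min}[P_\ell]^2}. \]
   Context: Notation: $\|\cdot\|$ is the Euclidean norm (spectral norm for matrices); $|x|$ is the componentwise absolute value; $\sigma_{\min}[M]$ is the smallest singular value of $M$; for a positive vector $w$, $D(w)=\mathrm{diag}(1/w_1,\dots,1/w_m)$. Setting: $r\ge1$ levels; functions $f_\ell:\mathbb{R}^{n_\ell}\to\mathbb{R}$, $n_r=n$, $f_r=f$; for $\ell\ge2$ full-rank linear $R_\ell:\mathbb{R}^{n_\ell}\to\mathbb{R}^{n_{\ell-1}}$, $P_\ell:\mathbb{R}^{n_{\ell-1}}\to\mathbb{R}^{n_\ell}$ with $\omega P_\ell=R_\ell^T$, $\omega>0$. AS.1: each $f_\ell$ is continuously differentiable. AS.2: each $\nabla f_\ell$ is Lipschitz with constant $L\ge0$. Algorithm MOFFTR$(\ell,h_\ell,x_{\ell,0},\epsilon_\ell,i^{\max}_\ell,\delta_\ell,w_{\ell,0})$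 with constants $\kappa_R\in(0,1)$, $\alpha\ge1$, $\tau\in(0,1]$, $\kappa_B\ge1$, $\varsigma_j\in(0,1]$; $i=0$. Step 1: if $\ell<r$ and $\|P_{\ell+1}(x_{\ell,i}-x_{\ell,0})\|>\delta_\ell$, return $x_{\ell,i-1}$. Else $g_{\ell,i}=\nabla h_\ell(x_{\ell,i})$; if $\|g_{\ell,i}\|\le\epsilon_\ell$ or $i=i^{\max}_\ell$, return $x_{\ell,i}$. Step 2: $\widehat\Delta_{\ell,i}=D(w_{\ell,i})|g_{\ell,i}|$; $\Delta_{\ell,i}=\widehat\Delta_{\ell,i}$ if $\ell=r$, else $\Delta_{\ell,i}=\min[2\delta_\ell/(\|P_{\ell+1}\|\|\widehat\Delta_{\ell,i}\|),1]\widehat\Delta_{\ell,i}$. For $i>0$ choose $w_{\ell,i}$ with $w_{\ell,i,j}\ge\varsigma_j$. If a Taylor step is chosen, go to Step 4. Step 3: choose $w_{\ell-1,0}$ with $w_{\ell-1,0,j}\ge\varsigma_j$, a variant-dependent ''lower-level weights large enough'' condition, and $\|D(w_{\ell-1,0})|R_\ell g_{\ell,i}|\|\le\alpha\|\Delta_{\ell,i}\|/\|P_\ell\|$. If $\ell=1$ or $\sum_j[R_\ell g_{\ell,i}]_j^2/w_{\ell-1,0,j}<\kappa_R\sum_j g_{\ell,i,j}^2/w_{\ell,i,j}$, go to Step 4. Otherwise (recursive iteration) $s_{\ell,i}=P_\ell[\mathrm{MOFFTR}(\ell-1,h_{\ell-1},R_\ell x_{\ell,i},\epsilon_{\ell-1},i^{\max}_{\ell-1},\alpha\|\Delta_{\ell,i}\|,w_{\ell-1,0})-R_\ell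 x_{\ell,i}]$ with $h_{\ell-1}(x_{\ell-1,0}+s)=f_{\ell-1}(x_{\ell-1,0}+s)+(R_\ell g_{\ell,i}-\nabla f_{\ell-1}(x_{\ell-1,0}))^Ts$, $x_{\ell-1,0}=R_\ell x_{\ell,i}$; go to Step 5. Step 4 (Taylor iteration): symmetric $B$ with $\|B\|\le\kappa_B$; step $s$ with $|s_j|\le\Delta_{\ell,i,j}$ and $g^Ts+\frac12s^TBs\le\tau(g^Ts^Q+\frac12(s^Q)^TBs^Q)$, $s^L_j=-\mathrm{sign}(g_j)\Delta_{\ell,i,j}$, $s^Q=\gamma s^L$, $\gamma=\min[1,|g^Ts^L|/((s^L)^TBs^L)]$ if $(s^L)^TBs^L>0$, else $\gamma=1$. Step 5: $x_{\ell,i+1}=x_{\ell,i}+s_{\ell,i}$, $i\leftarrow i+1$, go to Step 1. Top-level call MOFFTR$(r,f,x_{r,0},\epsilon_r,i^{\max}_r,+\infty,w_{r,0})$, $h_r=f$. *)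

(* Defs.v *)
From HB Require Import structures.
From mathcomp Require Import all_boot all_order all_algebra.
From mathcomp Require Import all_classical all_reals all_analysis.
Set Implicit Arguments. Unset Strict Implicit. Unset Printing Implicit Defensive.
Import Order.TTheory GRing.Theory Num.Theory.
Import numFieldNormedType.Exports.
Local Open Scope classical_set_scope.
Local Open Scope ring_scope.

Definition dotv {R : realType} {k : nat} (u v : 'cV[R]_k) : R :=
  \sum_(j < k) u j 0 * v j 0.
Definition enorm {R : realType} {k : nat} (v : 'cV[R]_k) : R :=
  Num.sqrt (dotv v v).

Definition sigma_min {R : realType} {p q : nat} (M : 'M[R]_(p, q)) : R :=
  inf [set enorm (M *m v) | v in [set v : 'cV[R]_q | enorm v = 1]].

(* gradient of the lower-level model
   h_{l-1}(x0 + s) = f_{l-1}(x0 + s) + (Rg - grad f_{l-1}(x0))^T s *)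
Definition hgrad {R : realType} {m : nat} (gradf : 'cV[R]_m -> 'cV[R]_m)
  (Rg x0 : 'cV[R]_m) (y : 'cV[R]_m) : 'cV[R]_m :=
  gradf y + (Rg - gradf x0).

(* Main.v *)
Require Import Defs.
From HB Require Import structures.
From mathcomp Require Import all_boot all_order all_algebra.
From mathcomp Require Import all_classical all_reals all_analysis.
From mathcomp Require Import ring lra.
Import Order.TTheory GRing.Theory Num.Theory.
Import numFieldNormedType.Exports.
Local Open Scope classical_set_scope.
Local Open Scope ring_scope.

Section H.
Context {R : realType}.

Lemma dotvC {k} (u v : 'cV[R]_k) : dotv u v = dotv v u.
Proof. by rewrite /dotv; apply: eq_bigr => i _; rewrite mulrC. Qed.

Lemma dotvDr {k} (u v w : 'cV[R]_k) : dotv u (v + w) = dotv u v + dotv u w.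
Proof. by rewrite /dotv -big_split; apply: eq_bigr => i _; rewrite !mxE mulrDr. Qed.

Lemma dotvZr {k} (a : R) (u v : 'cV[R]_k) : dotv u (a *: v) = a * dotv u v.
Proof. by rewrite /dotv mulr_sumr; apply: eq_bigr => i _; rewrite !mxE; ring. Qed.

Lemma dotvNr {k} (u v : 'cV[R]_k) : dotv u (- v) = - dotv u v.
Proof. by rewrite -scaleN1r dotvZr mulN1r. Qed.

Lemma dotvBr {k} (u v w : 'cV[R]_k) : dotv u (v - w) = dotv u v - dotv u w.
Proof. by rewrite dotvDr dotvNr. Qed.

Lemma dotvDl {k} (u v w : 'cV[R]_k) : dotv (v + w) u = dotv v u + dotv w u.
Proof. by rewrite dotvC dotvDr !(dotvC u). Qed.
Lemma dotvZl {k} (a : R) (u v : 'cV[R]_k) : dotv (a *: v) u = a * dotv v u.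
Proof. by rewrite dotvC dotvZr dotvC. Qed.
Lemma dotvBl {k} (u v w : 'cV[R]_k) : dotv (v - w) u = dotv v u - dotv w u.
Proof. by rewrite dotvC dotvBr !(dotvC u). Qed.

Lemma dotv_sumr {k} N (u : 'cV[R]_k) (F : 'I_N -> 'cV[R]_k) :
  dotv u (\sum_(i < N) F i) = \sum_(i < N) dotv u (F i).
Proof.
elim: N F => [|N IH] F; first by rewrite !big_ord0 /dotv big1 // => i _; rewrite mxE mulr0.
by rewrite !big_ord_recr /= dotvDr IH.
Qed.

Lemma dotv_ge0 {k} (v : 'cV[R]_k) : 0 <= dotv v v.
Proof. by apply: sumr_ge0 => i _; exact: sqr_ge0. Qed.

Lemma enorm_ge0 {k} (v : 'cV[R]_k) : 0 <= enorm v.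
Proof. exact: sqrtr_ge0. Qed.

Lemma enorm_sqr {k} (v : 'cV[R]_k) : enorm v ^+ 2 = dotv v v.
Proof. by rewrite sqr_sqrtr // dotv_ge0. Qed.

Lemma dotv0 {k} (u v : 'cV[R]_k) : dotv v v = 0 -> dotv v u = 0.
Proof.
move=> H.
have H0 : forall i : 'I_k, true -> v i 0 * v i 0 = 0.
  by apply: psumr_eq0P H => i _; exact: sqr_ge0.
rewrite /dotv big1 // => i _.
by move/eqP: (H0 i isT); rewrite mulf_eq0 orbb => /eqP ->; rewrite mul0r.
Qed.

Lemma CS {k} (u v : 'cV[R]_k) : `|dotv u v| <= enorm u * enorm v.
Proof.
set a := enorm u; set b := enorm v.
have ha : a ^+ 2 = dotv u u by exact: enorm_sqr.
have hb : b ^+ 2 = dotv v v by exact: enorm_sqr.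
have a0 : 0 <= a by exact: enorm_ge0.
have b0 : 0 <= b by exact: enorm_ge0.
have h1 := dotv_ge0 (b *: u - a *: v).
have h2 := dotv_ge0 (b *: u + a *: v).
rewrite !(dotvBl, dotvDl, dotvBr, dotvDr, dotvZl, dotvZr) in h1 h2.
rewrite (dotvC v u) -ha -hb in h1 h2.
have [ab0|abpos] := eqVneq (a * b) 0.
  move/eqP: ab0; rewrite mulf_eq0 => /orP[]/eqP a00.
    by rewrite dotv0 ?normr0 ?mulr_ge0 // -ha a00 expr0n.
  by rewrite dotvC dotv0 ?normr0 ?mulr_ge0 // -hb a00 expr0n.
have abp : 0 < a * b by rewrite lt_def abpos mulr_ge0.
rewrite ler_norml; apply/andP; split.
  have : 0 <= (a * b) * (a * b + dotv u v) by nra.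
  by rewrite pmulr_rge0 //; lra.
have : 0 <= (a * b) * (a * b - dotv u v) by nra.
by rewrite pmulr_rge0 //; lra.
Qed.

Lemma enormZ {k} (a : R) (v : 'cV[R]_k) : enorm (a *: v) = `|a| * enorm v.
Proof.
by rewrite /enorm dotvZl dotvZr mulrA -expr2 sqrtrM ?sqr_ge0 // sqrtr_sqr.
Qed.

Lemma enormN {k} (v : 'cV[R]_k) : enorm (- v) = enorm v.
Proof. by rewrite -scaleN1r enormZ normrN normr1 mul1r. Qed.

Lemma enormD {k} (u v : 'cV[R]_k) : enorm (u + v) <= enorm u + enorm v.
Proof.
rewrite -ler_sqr ?nnegrE ?addr_ge0 ?enorm_ge0 //.
rewrite enorm_sqr sqrrD !enorm_sqr dotvDl !dotvDr (dotvC v u).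
have := CS u v; rewrite ler_norml => /andP[_ h].
lra.
Qed.

Lemma enormB {k} (u v : 'cV[R]_k) : enorm (u - v) <= enorm u + enorm v.
Proof. by rewrite -(enormN v) enormD. Qed.

Lemma opbound {p q} (A : 'M[R]_(p, q)) :
  exists K, 0 <= K /\ forall y, enorm (A *m y) <= K * enorm y.
Proof.
pose a (i : 'I_p) : 'cV[R]_q := (row i A)^T.
exists (Num.sqrt (\sum_i enorm (a i) ^+ 2)); split; first exact: sqrtr_ge0.
move=> y.
rewrite -(@ger0_norm _ (enorm y)) ?enorm_ge0 // -sqrtr_sqr -sqrtrM ?sumr_ge0 //; last by move=> *; exact: sqr_ge0.
rewrite /enorm ler_sqrt; last by rewrite mulr_ge0 ?sumr_ge0 // => *; exact: sqr_ge0.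
rewrite mulr_suml; apply: ler_sum => i _.
have -> : (A *m y) i 0 = dotv (a i) y.
  by rewrite !mxE /dotv; apply: eq_bigr => j _; rewrite !mxE.
rewrite sqr_sqrtr ?dotv_ge0 // -enorm_sqr -exprMn.
have := CS (a i) y.
move: (dotv (a i) y) => d h.
rewrite -[d * d]expr2 -real_normK ?num_real //.
by rewrite ler_sqr ?nnegrE ?mulr_ge0 ?enorm_ge0.
Qed.

Lemma dotvP {m n} (omega : R) (Rl : 'M[R]_(m, n)) (g : 'cV[R]_n) (w : 'cV[R]_m) :
  dotv g ((omega^-1 *: Rl^T) *m w) = omega^-1 * dotv (Rl *m g) w.
Proof.
rewrite /dotv mulr_sumr.
under eq_bigr => j _ do rewrite !mxE mulr_sumr.
rewrite exchange_big /=; apply: eq_bigr => i _.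
rewrite !mxE mulr_suml mulr_sumr; apply: eq_bigr => j _.
rewrite !mxE; ring.
Qed.

Lemma sigma_prop {m n} (omega : R) (Rl : 'M[R]_(m, n)) :
  0 < omega -> \rank Rl = m -> (0 < m)%N ->
  0 < sigma_min (omega^-1 *: Rl^T) /\
  forall w, sigma_min (omega^-1 *: Rl^T) * enorm w <= enorm ((omega^-1 *: Rl^T) *m w).
Proof.
set P := omega^-1 *: Rl^T => om0 rk m0.
have : row_free Rl by rewrite /row_free rk.
case/row_freeP => Q HQ.
have [K [K0 HK]] := opbound Q^T.
have Hw : forall w, enorm w <= omega * K * enorm (P *m w).
  move=> w.
  have eq : w = omega *: (Q^T *m (P *m w)).
    rewrite /P -scalemxAl scalemxAr scalerA mulfV ?gt_eqF // scale1r.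
    by rewrite mulmxA -trmx_mul HQ trmx1 mul1mx.
  rewrite {1}eq enormZ gtr0_norm // -mulrA ler_pM2l //.
have [v1 v11] : exists v : 'cV[R]_m, enorm v = 1.
  exists (delta_mx (Ordinal m0) 0).
  rewrite /enorm /dotv (bigD1 (Ordinal m0)) //= big1 ?addr0.
    by rewrite !mxE !eqxx mulr1 sqrtr1.
  by move=> j /negbTE hj; rewrite !mxE hj mul0r.
have KP : 0 < omega * K.
  have h := Hw v1; rewrite v11 in h.
  have hK : 0 <= omega * K by rewrite mulr_ge0 // ltW.
  rewrite lt_neqAle hK andbT; apply/eqP => e.
  by move: h; rewrite -e mul0r ler10.
have lb : lbound [set enorm (P *m v) | v in [set v : 'cV[R]_m | enorm v = 1]] (omega * K)^-1.
  move=> y [v /= hv <-].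
  rewrite -[_^-1]mulr1 ler_pdivrMl //.
  by rewrite -hv Hw.
have glb : has_lbound [set enorm (P *m v) | v in [set v : 'cV[R]_m | enorm v = 1]].
  by exists 0 => y [v _ <-]; exact: enorm_ge0.
split.
  apply: lt_le_trans (lb_le_inf _ lb); first by rewrite invr_gt0.
  by exists (enorm (P *m v1)); exists v1.
move=> w.
have [w0|wn0] := eqVneq (enorm w) 0; first by rewrite w0 mulr0 enorm_ge0.
have wp : 0 < enorm w by rewrite lt_neqAle eq_sym wn0 enorm_ge0.
have : sigma_min P <= enorm (P *m ((enorm w)^-1 *: w)).
  rewrite /sigma_min; apply: (ge_inf glb); exists ((enorm w)^-1 *: w) => //=.
  by rewrite enormZ ger0_norm ?invr_ge0 ?enorm_ge0 // mulVf.
rewrite -scalemxAr enormZ ger0_norm ?invr_ge0 ?enorm_ge0 //.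
by rewrite ler_pdivlMl // mulrC.
Qed.
End H.

Lemma subDsub (V : zmodType) (a b c : V) : a - (b + (a - c)) = c - b.
Proof. by rewrite opprD addrA opprB addrC addrA subrK. Qed.

Theorem lemma3p4 (R : realType) (m n : nat) (omega L alpha : R)
  (Rl : 'M[R]_(m, n))
  (f : 'cV[R]_m -> R) (gradf : 'cV[R]_m -> 'cV[R]_m)
  (x g Delta : 'cV[R]_n) (imax N : nat) (xs ss : nat -> 'cV[R]_m) :
  let P := omega^-1 *: Rl^T in
  let delta := alpha * enorm Delta in
  0 < omega -> 0 <= L -> 1 <= alpha ->
  \rank Rl = m ->
  (* AS.1 for f_{l-1}: differentiable with gradient gradf *)
  (forall y, differentiable f y) ->
  (forall y v, 'd f y v = dotv (gradf y) v) ->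
  (* AS.2: gradient Lipschitz with constant L *)
  (forall y z, enorm (gradf y - gradf z) <= L * enorm (y - z)) ->
  (* i_{l-1} = N >= 1 completed lower-level iterations, N <= imax *)
  (1 <= N)%N -> (N <= imax)%N ->
  xs 0%N = Rl *m x ->
  (forall k, (k < N)%N -> xs k.+1 = xs k + ss k) ->
  (* lower-level trust-region condition of Step 1 with delta_{l-1} *)
  (forall k, (k <= N)%N -> enorm (P *m (xs k - xs 0%N)) <= delta) ->
  let s := P *m (xs N - xs 0%N) in
  `| dotv g s
     - omega^-1 * \sum_(k < N) dotv (hgrad gradf (Rl *m g) (xs 0%N) (xs k)) (ss k) |
  <= 2 * imax%:R * L * delta ^+ 2 / (omega * sigma_min P ^+ 2).
Proof.
move=> P delta om0 L0 al1 rk _ _ Lip N1 NI x0 xsS tr.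
cbv zeta; set s := P *m (xs N - xs 0%N).
have d0 : 0 <= delta by rewrite /delta mulr_ge0 ?enorm_ge0 // (le_trans ler01 al1).
have RHS0 : 0 <= 2 * imax%:R * L * delta ^+ 2 / (omega * sigma_min P ^+ 2).
  apply: divr_ge0; first exact: (mulr_ge0 (mulr_ge0 (mulr_ge0 (ler0n _ 2) (ler0n _ imax)) L0) (sqr_ge0 _)).
  by rewrite mulr_ge0 ?sqr_ge0 ?ltW.
have [m0|mpos] := posnP m.
  subst m.
  have dz : forall (u v : 'cV[R]_0), dotv u v = 0 by move=> u v; rewrite /dotv big_ord0.
  rewrite /s (flatmx0 (xs N - xs 0%N)) mulmx0.
  have -> : dotv g 0 = 0 by rewrite /dotv big1 // => i _; rewrite mxE mulr0.
  rewrite big1 ?mulr0 ?subr0 ?normr0 // => k _; exact: dz.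
have [sp Hs] := sigma_prop _ _ om0 rk mpos.
have Hs' : forall w, sigma_min P * enorm w <= enorm (P *m w) := Hs.
set sg := sigma_min P in sp Hs' RHS0 *.
have tel : forall k, (k <= N)%N -> xs k - xs 0%N = \sum_(i < k) ss i.
  elim=> [|k IH] hk; first by rewrite subrr big_ord0.
  by rewrite big_ord_recr /= -IH ?(ltnW hk) // xsS // addrAC.
have E : dotv g s - omega^-1 * \sum_(k < N) dotv (hgrad gradf (Rl *m g) (xs 0%N) (xs k)) (ss k)
   = omega^-1 * \sum_(k < N) dotv (gradf (xs 0%N) - gradf (xs k)) (ss k).
  rewrite /s /P dotvP (tel N) // dotv_sumr -mulrBr -sumrB; congr (_ * _).
  apply: eq_bigr => k _; rewrite -dotvBl /hgrad; congr dotv.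
  exact: subDsub.
rewrite E.
have hx : forall k, (k <= N)%N -> enorm (xs k - xs 0%N) <= delta / sg.
  move=> k hk; rewrite ler_pdivlMr // mulrC.
  exact: le_trans (Hs' _) (tr _ hk).
pose T := L * (delta / sg) * (delta / sg + delta / sg).
have hT : forall k : 'I_N, `|dotv (gradf (xs 0%N) - gradf (xs k)) (ss k)| <= T.
  move=> k.
  apply: le_trans (CS _ _) _.
  apply: ler_pM; rewrite ?enorm_ge0 //.
    apply: le_trans (Lip _ _) _.
    by rewrite -opprB enormN ler_wpM2l // hx // ltnW.
  have -> : ss k = (xs k.+1 - xs 0%N) - (xs k - xs 0%N).
    by rewrite xsS // opprB addrA subrK addrAC subrr add0r.
  by apply: le_trans (enormB _ _) _; rewrite lerD ?hx // ltnW.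
have q0 : 0 <= delta / sg by rewrite divr_ge0 // ltW.
have T0 : 0 <= T by apply: mulr_ge0; [apply: mulr_ge0|apply: addr_ge0].
have -> : 2 * imax%:R * L * delta ^+ 2 / (omega * sg ^+ 2) = omega^-1 * (imax%:R * T).
  rewrite /T; field; rewrite ?gt_eqF //.
rewrite normrM gtr0_norm ?invr_gt0 // ler_pM2l ?invr_gt0 //.
apply: le_trans (ler_norm_sum _ _ _) _.
apply: le_trans (ler_sum _ (fun k _ => hT k)) _.
rewrite sumr_const card_ord -[T *+ N]mulr_natl.
by apply: ler_pM; rewrite ?ler0n ?ler_nat.
Qed.
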